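(* Let $(\mathcal{G},S)$ be an instance of \textsc{Temporally Disjoint Walks} where $\mathcal{G}$ is a temporal line, and let $\mathcal{S}$ be a solution (a family of pairwise temporally disjoint temporal $(s_i,z_i)$-walks, one for each $(s_i,z_i)\in S$) that minimizes the sum of the lengths of its walks among all solutions. Let $W\in\mathcal{S}$ be a temporal $(s,z)$-walk in which the transitions $(a,b,t),(b,a,t')$ with $t<t'$ are consecutive. Then there exists a temporal $(s',z')$-walk $W'$ in $\mathcal{S}$ that contains a transition $(c,a,t'')$ or $(a,c,t'')$ for some vertex $c$ and some $t''$ with $t<t''<t'$.
   Context: A temporal graph $\mathcal{G}=(V,E_1,\ldots,E_T)$ has vertex set $V$ and edge sets $E_1,\ldots,E_T\subseteq\binom{V}{2}$; it is a temporal line if its underlying graph $(V,\bigcup_i E_i)$ is a path. A temporal $(s,z)$-walk of length $k$ from $s=v_0$ to $z=v_k$ is a sequence of transitions $((v_{i-1},v_i,t_i))_{i=1}^k$ with $\{v_{i-1},v_i\}\in E_{t_i}$ and $t_1<\cdots<t_k$. It occupies $v_i$ during $[t_i,t_{i+1}]$ for $i\in[k-1]$, $v_0$ during $[t_1,t_1]$ and $v_k$ during $[t_k,t_k]$. Two temporal walks are temporally disjoint unless some vertex is occupied by both during intersecting time intervals. \textsc{Temporally Disjoint Walks} asks, given $\mathcal{G}$ and a multiset $S\subseteq V\times V$ of source-sink pairs, for pairwise temporally disjoint temporal $(s_i,z_i)$-walks, one for each $(s_i,z_i)\in S$. *)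

(* Defs.v *)
From mathcomp Require Import all_boot.
Set Implicit Arguments. Unset Strict Implicit. Unset Printing Implicit Defensive.

(* A temporal graph on the finite vertex type V with lifetime T is given by
   edge sets E 1, ..., E T (values E t for t outside [1,T] are ignored);
   each edge is a 2-element subset of V. *)
Definition temporal_graph (V : finType) (T : nat) (E : nat -> {set {set V}}) : Prop :=
  forall t e, 1 <= t <= T -> e \in E t -> #|e| = 2.

Definition underlying_edge (V : finType) (T : nat) (E : nat -> {set {set V}}) (x y : V) : Prop :=
  exists t, 1 <= t <= T /\ [set x; y] \in E t.

Definition adjacent_in (V : eqType) (p : seq V) (x y : V) : Prop :=
  exists i, i.+1 < size p /\
    ((nth x p i = x /\ nth x p i.+1 = y) \/ (nth x p i = y /\ nth x p i.+1 = x)).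

Definition temporal_line (V : finType) (T : nat) (E : nat -> {set {set V}}) : Prop :=
  temporal_graph T E /\
  exists p : seq V, uniq p /\ (forall x, x \in p) /\
    (forall x y, underlying_edge T E x y <-> adjacent_in p x y).

Definition transition (V : finType) := (V * V * nat)%type.
Definition tr_src (V : finType) (x : transition V) : V := x.1.1.
Definition tr_tgt (V : finType) (x : transition V) : V := x.1.2.
Definition tr_time (V : finType) (x : transition V) : nat := x.2.

Definition temporal_walk (V : finType) (T : nat) (E : nat -> {set {set V}})
    (s z : V) (w : seq (transition V)) : Prop :=
  match w with
  | [::] => s = z
  | x0 :: _ =>
      tr_src x0 = s /\ tr_tgt (last x0 w) = z /\
      (forall i, i < size w ->
         [set tr_src (nth x0 w i); tr_tgt (nth x0 w i)] \in E (tr_time (nth x0 w i))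
         /\ 1 <= tr_time (nth x0 w i) <= T) /\
      (forall i, i.+1 < size w ->
         tr_tgt (nth x0 w i) = tr_src (nth x0 w i.+1) /\
         tr_time (nth x0 w i) < tr_time (nth x0 w i.+1))
  end.

(* Occupation list: triples (v, lo, hi) meaning the walk occupies v during
   [lo, hi]: v_0 during [t_1,t_1], v_i during [t_i,t_{i+1}] (1 <= i <= k-1),
   v_k during [t_k,t_k].  The empty walk occupies nothing. *)
Definition occupation (V : finType) (w : seq (transition V)) : seq (V * nat * nat) :=
  match w with
  | [::] => [::]
  | x0 :: _ =>
      (tr_src x0, tr_time x0, tr_time x0) ::
      [seq (tr_tgt (nth x0 w i), tr_time (nth x0 w i), tr_time (nth x0 w i.+1))
         | i <- iota 0 (size w).-1] ++
      [:: (tr_tgt (last x0 w), tr_time (last x0 w), tr_time (last x0 w))]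
  end.

Definition temporally_disjoint (V : finType) (w1 w2 : seq (transition V)) : Prop :=
  forall o1 o2, o1 \in occupation w1 -> o2 \in occupation w2 ->
    o1.1.1 = o2.1.1 -> ~ (o1.1.2 <= o2.2 /\ o2.1.2 <= o1.2).

(* A solution of Temporally Disjoint Walks for the (multi)set S of pairs,
   given as a list: walk number i is a temporal (s_i, z_i)-walk. *)
Definition tdw_solution (V : finType) (T : nat) (E : nat -> {set {set V}})
    (S : seq (V * V)) (sol : seq (seq (transition V))) : Prop :=
  size sol = size S /\
  (forall sz w, (sz, w) \in zip S sol -> temporal_walk T E sz.1 sz.2 w) /\
  (forall i j, i < size S -> j < size S -> i <> j ->
     temporally_disjoint (nth [::] sol i) (nth [::] sol j)).

Definition total_length (V : finType) (sol : seq (seq (transition V))) : nat :=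
  sumn (map size sol).

(* Main.v *)
Require Import Defs.
From mathcomp Require Import all_boot zify.
Set Implicit Arguments. Unset Strict Implicit. Unset Printing Implicit Defensive.

Definition stp (V : finType) (x y : transition V) : bool :=
  (tr_tgt x == tr_src y) && (tr_time x < tr_time y).
Definition vtr (V : finType) (T : nat) (E : nat -> {set {set V}}) (x : transition V) : bool :=
  ([set tr_src x; tr_tgt x] \in E (tr_time x)) && (1 <= tr_time x <= T).

Fixpoint mid (V : finType) (w : seq (transition V)) : seq (V * nat * nat) :=
  match w with
  | x :: r => match r with
              | y :: _ => (tr_tgt x, tr_time x, tr_time y) :: mid r
              | [::] => [::] end
  | [::] => [::]
  end.

Definition occ' (V : finType) (w : seq (transition V)) : seq (V * nat * nat) :=
  match w with
  | [::] => [::]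
  | x0 :: r => (tr_src x0, tr_time x0, tr_time x0) :: mid w ++
       [:: (tr_tgt (last x0 r), tr_time (last x0 r), tr_time (last x0 r))]
  end.

Lemma mid_nth (V : finType) d (w : seq (transition V)) :
  mid w = [seq (tr_tgt (nth d w i), tr_time (nth d w i), tr_time (nth d w i.+1)) | i <- iota 0 (size w).-1].
Proof.
elim: w => [|x r IH] //=.
case: r IH => [|y r'] IH //=.
congr (_ :: _).
rewrite [LHS](_ : _ = mid (y :: r')) // IH /= -[1]addn0 iotaDl -map_comp.
by apply: eq_map => i /=; rewrite add0n.
Qed.

Lemma occE (V : finType) (w : seq (transition V)) : occupation w = occ' w.
Proof. case: w => [|x0 r] //. rewrite /occupation /occ' (mid_nth x0). by []. Qed.

Lemma walkE (V : finType) T E s z (x : transition V) r :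
  temporal_walk T E s z (x :: r) <->
  [/\ tr_src x = s, tr_tgt (last x r) = z, all (vtr T E) (x :: r) & path (@stp V) x r].
Proof.
rewrite /temporal_walk; split.
- move=> [h1 [h2 [h3 h4]]]; split => //.
  + apply/(all_nthP x) => i hi; have [h5 h6] := h3 i hi; by apply/andP.
  + apply/(pathP x) => i hi; have [h5 h6] := h4 i hi; by apply/andP; split => //; apply/eqP.
- move=> [h1 h2 /(all_nthP x) h3 /(pathP x) h4]; split => //; split => //; split.
  + by move=> i hi; have /andP[] := h3 i hi.
  + by move=> i hi; have /andP[/eqP ? ?] := h4 i hi.
Qed.

Lemma mid_cat (V : finType) (x : transition V) s y q :
  mid ((x :: s) ++ y :: q) = mid (x :: s) ++ (tr_tgt (last x s), tr_time (last x s), tr_time y) :: mid (y :: q).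
Proof.
elim: s x => [|x' s IH] x //=.
by rewrite -IH.
Qed.

Lemma midA (V : finType) (s : seq (transition V)) o :
  o \in mid s -> exists2 x, x \in s & tr_tgt x = o.1.1 /\ tr_time x = o.1.2.
Proof.
elim: s => [|x r IH] //=.
case: r IH => [|y r'] IH //=.
rewrite inE => /orP[/eqP -> | /IH [u hu hh]].
- by exists x; rewrite ?inE ?eqxx.
- by exists u => //; rewrite inE hu orbT.
Qed.

Lemma occA (V : finType) (w : seq (transition V)) o :
  o \in occ' w -> exists2 x, x \in w & tr_time x = o.1.2 /\ (tr_src x = o.1.1 \/ tr_tgt x = o.1.1).
Proof.
case: w => [|x r] //.
rewrite /occ' inE => /orP[/eqP -> | ].
  by exists x; rewrite ?inE ?eqxx //; split => //; left.
rewrite mem_cat => /orP[/midA [u hu [h1 h2]] | ].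
  by exists u => //; split => //; right.
rewrite inE => /eqP ->; exists (last x r); first by apply: mem_last.
by split => //; right.
Qed.

Lemma mid_lt (V : finType) (x : transition V) r o :
  path (@stp V) x r -> o \in mid (x :: r) -> o.1.2 < o.2.
Proof.
elim: r x => [|y r IH] x //=.
move=> /andP[/andP[_ hxy] hp]; rewrite inE => /orP[/eqP -> //| ].
exact: IH.
Qed.

Lemma occ_le (V : finType) (x : transition V) r o :
  path (@stp V) x r -> o \in occ' (x :: r) -> o.1.2 <= o.2.
Proof.
move=> hp; rewrite /occ' inE => /orP[/eqP -> //| ].
rewrite mem_cat => /orP[/(mid_lt hp) /ltnW // | ].
by rewrite inE => /eqP ->.
Qed.

Arguments mid : simpl never.
Lemma mid_cons2 (V : finType) (x y : transition V) r :
  mid (x :: y :: r) = (tr_tgt x, tr_time x, tr_time y) :: mid (y :: r).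
Proof. by []. Qed.
Lemma mid_1 (V : finType) (x : transition V) : mid [:: x] = [::].
Proof. by []. Qed.

Lemma trE (V : finType) (u v : V) s :
  (tr_src (u, v, s) = u) * (tr_tgt (u, v, s) = v) * (tr_time (u, v, s) = s).
Proof. by []. Qed.

Lemma keyB (V : finType) (a b : V) t t' p q (o : V * nat * nat) :
  (forall x p', p = x :: p' -> tr_tgt (last x p') = a /\ tr_time (last x p') < t) ->
  (forall y q', q = y :: q' -> tr_src y = a /\ t' < tr_time y) ->
  t < t' ->
  o \in occ' (p ++ q) ->
  o \in occ' (p ++ (a, b, t) :: (b, a, t') :: q) \/
  (o.1.1 = a /\ exists lo hi, (a, lo, t) \in occ' (p ++ (a, b, t) :: (b, a, t') :: q) /\
      (a, t', hi) \in occ' (p ++ (a, b, t) :: (b, a, t') :: q) /\ lo <= o.1.2 /\ o.2 <= hi).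
Proof.
move=> hp hq htt.
case: p hp => [|x p'] hp; case: q hq => [|y q'] hq //.
- have [hy1 hy2] := hq y q' erefl.
  rewrite /= ?mid_cons2 /= inE => /orP[/eqP -> | h].
    right; split => //; exists t, (tr_time y); rewrite /= !trE !inE. rewrite !eqxx ?orbT /=.
    by split => //; split => //; lia.
  by left; rewrite /= !inE; move: h; rewrite mem_cat => /orP[] ->; rewrite ?orbT.
- have [hx1 hx2] := hp x p' erefl.
  rewrite cats0 /= inE => /orP[/eqP -> | ]; first by left; rewrite /= inE eqxx.
  have mc := mid_cat x p' (a, b, t) [:: (b, a, t')].
  rewrite /= in mc.
  rewrite mem_cat => /orP[h | ]; first by left; rewrite /= mc inE !mem_cat h orbT.
  rewrite inE => /eqP ->; right; split => //.
  exists (tr_time (last x p')), t'; rewrite /= mc ?mid_cons2 ?mid_1 hx1 last_cat /=.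
  rewrite !inE !mem_cat !inE !eqxx !orbT /=; split => //; split => //; split => //; lia.
- have [hx1 hx2] := hp x p' erefl.
  have [hy1 hy2] := hq y q' erefl.
  have mc := mid_cat x p' (a, b, t) [:: (b, a, t') & y :: q'].
  have mc' := mid_cat x p' y q'.
  rewrite /= in mc mc'.
  rewrite /= mc' inE => /orP[/eqP -> | ]; first by left; rewrite /= inE eqxx.
  rewrite -catA mem_cat => /orP[h | ]; first by left; rewrite /= mc inE !mem_cat h !orbT.
  rewrite inE => /orP[/eqP -> | h].
    right; split => //.
    exists (tr_time (last x p')), (tr_time y); rewrite /= mc ?mid_cons2 !trE. rewrite hx1 !(inE, mem_cat) !eqxx ?orbT /=.
    by split => //; split => //; split.
  left; rewrite /= mc ?mid_cons2 !last_cat /= !(inE, mem_cat).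
  move: h; rewrite !last_cat /= mem_cat inE => /orP[] ->; by rewrite ?orbT.
Qed.

Arguments temporal_walk : simpl never.
Lemma walk_cut (V : finType) T E (s z a b : V) t t' p q :
  temporal_walk T E s z (p ++ (a, b, t) :: (b, a, t') :: q) ->
  [/\ temporal_walk T E s z (p ++ q),
      (forall x p', p = x :: p' -> tr_tgt (last x p') = a /\ tr_time (last x p') < t) &
      (forall y q', q = y :: q' -> tr_src y = a /\ t' < tr_time y)].
Proof.
case: p => [|x p'] /=.
- move/walkE => [h1 h2 h3 h4].
  move: h4 => /= /andP[/andP[_ htt] hpq].
  have hq : forall y q', q = y :: q' -> tr_src y = a /\ t' < tr_time y.
    move=> y q' eq; move: hpq; rewrite eq /= => /andP[/andP[/eqP <- ht] _]; by split.
  split => //.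
  case: q h2 h3 hpq hq => [|y q'] h2 h3 hpq hq.
    by rewrite /= -h1 -h2.
  have [hy1 hy2] := hq y q' erefl.
  apply/walkE; split => //.
  + by rewrite hy1.
  + by move: h3; rewrite /= => /andP[_ /andP[_]].
  + by move: hpq => /= /andP[_].
- move/walkE => [h1 h2 h3 h4].
  move: h4; rewrite cat_path => /andP[hp1] /= /andP[/andP[/eqP hx1 hx2] /andP[/andP[_ htt] hpq]].
  have hq : forall y q', q = y :: q' -> tr_src y = a /\ t' < tr_time y.
    move=> y q' eq; move: hpq; rewrite eq /= => /andP[/andP[/eqP <- ht] _]; by split.
  have hp : forall x0 p0, x :: p' = x0 :: p0 -> tr_tgt (last x0 p0) = a /\ tr_time (last x0 p0) < t.
    by move=> x0 p0 [<- <-]; split.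
  split => //.
  apply/walkE; split => //.
  + move: h2; rewrite !last_cat.
    by case: q hpq hq {h3} => [|y q'] //= _ _ <-.
  + move: h3; rewrite /= !all_cat /= => /andP[-> /andP[-> /andP[_ /andP[_ ->]]]].
    by [].
  + rewrite cat_path hp1 /=.
    case: q hpq hq {h2 h3} => [|y q'] //= hpq hq.
    have [hy1 hy2] := hq y q' erefl.
    move: hpq => /= /andP[_ ->]; rewrite andbT /stp hx1 hy1 !trE eqxx /=.
    rewrite !trE in hx2 htt; lia.
Qed.

Lemma disj_sym (V : finType) (w1 w2 : seq (transition V)) :
  temporally_disjoint w1 w2 -> temporally_disjoint w2 w1.
Proof.
move=> h o1 o2 h1 h2 e [l1 l2]; apply: (h o2 o1 h2 h1 (esym e)); by split.
Qed.

Lemma disj_cut (V : finType) T E (a b : V) t t' p q w2 s2 z2 :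
  (forall x p', p = x :: p' -> tr_tgt (last x p') = a /\ tr_time (last x p') < t) ->
  (forall y q', q = y :: q' -> tr_src y = a /\ t' < tr_time y) ->
  t < t' ->
  temporal_walk T E s2 z2 w2 ->
  temporally_disjoint (p ++ (a, b, t) :: (b, a, t') :: q) w2 ->
  ~ (exists x, x \in w2 /\ t < tr_time x < t' /\ (tr_src x = a \/ tr_tgt x = a)) ->
  temporally_disjoint (p ++ q) w2.
Proof.
move=> hp hq htt hw hd hno o1 o2; rewrite !occE => h1 h2 hv [hlo hhi].
have hd' := hd; move: hd'; rewrite /temporally_disjoint => hd'.
case: (@keyB V a b t t' p q o1 hp hq htt h1) => [h1' | [ha [lo [hi [m1 [m2 [l1 l2]]]]]]].
  by apply: (hd o1 o2) => //; rewrite occE.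
have ha2 : o2.1.1 = a by rewrite -hv.
case: (leqP o2.1.2 t) => hlt.
  apply: (hd (a, lo, t) o2); rewrite ?occE //=; split => //; exact: leq_trans l1 hlo.
case: (leqP t' o2.2) => hgt.
  apply: (hd (a, t', hi) o2); rewrite ?occE //=; split => //; exact: leq_trans hhi l2.
case: w2 hw h2 hno {hd hd'} => [|x0 r] // /walkE [_ _ _ hpath] h2 hno.
have hle := occ_le hpath h2.
have [x hx [hxt hxa]] := occA h2.
apply: hno; exists x; split => //; split; first lia.
by rewrite -ha2.
Qed.

Lemma sum_set (V : finType) (sol : seq (seq (transition V))) i w' :
  i < size sol ->
  total_length (set_nth [::] sol i w') + size (nth [::] sol i) = total_length sol + size w'.
Proof.
rewrite /total_length.
elim: sol i => [|w sol IH] [|i] //= hi.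
- lia.
- have := IH i hi; lia.
Qed.

From Stdlib Require Import Classical.
Unset Implicit Arguments.

Theorem mainTheorem6 (V : finType) (T : nat) (E : nat -> {set {set V}})
    (S : seq (V * V)) (sol : seq (seq (transition V))) :
  temporal_line T E ->
  tdw_solution T E S sol ->
  (forall sol', tdw_solution T E S sol' -> total_length sol <= total_length sol') ->
  forall (i k : nat) (a b : V) (t t' : nat),
    i < size sol ->
    k.+1 < size (nth [::] sol i) ->
    nth (a, b, t) (nth [::] sol i) k = (a, b, t) ->
    nth (a, b, t) (nth [::] sol i) k.+1 = (b, a, t') ->
    t < t' ->
    exists j (c : V) (t'' : nat),
      j < size sol /\ t < t'' < t' /\
      ((c, a, t'') \in nth [::] sol j \/ (a, c, t'') \in nth [::] sol j).
Proof.
move=> _ [hsz [hwalks hdisj]] hmin i k a b t t' hi hk hX hY htt.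
apply: NNPP => hno.
have hnoj : forall j, j < size sol ->
  ~ (exists x, x \in nth [::] sol j /\ t < tr_time x < t' /\ (tr_src x = a \/ tr_tgt x = a)).
  move=> j hj [[[u v] tm] [hx [htm hsrc]]]; apply: hno.
  rewrite /tr_src /tr_tgt /tr_time /= in htm hsrc.
  case: hsrc => hsrc; subst.
  - by exists j, v, tm; split => //; split => //; right.
  - by exists j, u, tm; split => //; split => //; left.
have hw : forall j, j < size sol ->
  temporal_walk T E (nth (a, a) S j).1 (nth (a, a) S j).2 (nth [::] sol j).
  move=> j hj; apply: hwalks.
  rewrite -(nth_zip (a, a) [::] j (esym hsz)).
  by apply: mem_nth; rewrite size_zip hsz minnn -hsz.
set w := nth [::] sol i.
have e : w = take k w ++ (a, b, t) :: (b, a, t') :: drop k.+2 w.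
  have d1 := drop_nth (a, b, t) (ltnW hk).
  have d2 := drop_nth (a, b, t) hk.
  by rewrite -{1}(cat_take_drop k w) d1 d2 hX hY.
set p := take k w in e; set q := drop k.+2 w in e.
have hwi := hw i hi; rewrite -/w e in hwi.
have [hw' hp hq] := walk_cut hwi.
pose sol' := set_nth [::] sol i (p ++ q).
have hnth : forall j, nth [::] sol' j = if j == i then p ++ q else nth [::] sol j.
  by move=> j; rewrite /sol' nth_set_nth /=.
have hsz' : size sol' = size sol.
  by rewrite /sol' size_set_nth; apply/maxn_idPr.
have hsol' : tdw_solution T E S sol'.
  split; first by rewrite hsz'.
  split.
  - move=> sz w0 /(nthP ((a, a), [::])) [j].
    rewrite size_zip hsz' -hsz minnn => hj.
    rewrite nth_zip ?hsz' // => [[<- <-]].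
    rewrite hnth; case: eqP => [-> | _]; first exact: hw'.
    by apply: hw.
  - move=> i1 i2 hi1 hi2 hne; rewrite !hnth.
    have hdi : forall j, j < size sol -> j <> i -> temporally_disjoint (p ++ q) (nth [::] sol j).
      move=> j hj hji.
      apply: (disj_cut (b:=b) hp hq htt (hw j hj)); last exact: hnoj.
      rewrite -e; apply: hdisj; rewrite -?hsz //; by move/esym.
    case: eqP => [e1 | n1]; case: eqP => [e2 | n2].
    + by exfalso; apply: hne; rewrite e1 e2.
    + by subst; apply: hdi; rewrite ?hsz.
    + by subst; apply: disj_sym; apply: hdi; rewrite ?hsz.
    + exact: hdisj.
have := hmin _ hsol'.
have := sum_set (p ++ q) hi.
have hs : size w = size p + size q + 2 by rewrite {1}e size_cat /=; lia.
rewrite -/w hs size_cat.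
rewrite /sol'; lia.
Qed.
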